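(* For every integer $n\geq 4$, the wheel $W_n=C_n\lor K_1$ satisfies $\eta(W_n)=2$ if $n$ is even and $\eta(W_n)=3$ if $n$ is odd.
   Context: All graphs are finite, simple and undirected. $C_n$ is the cycle on $n$ vertices, $K_1$ is the graph with one vertex, and $G_1\lor G_2$ (join) is the graph on $V(G_1)\cup V(G_2)$ with edges $E(G_1)\cup E(G_2)\cup\{(u,v):u\in V(G_1),v\in V(G_2)\}$. For a vertex $v$, $N(v)$ is its set of neighbours. For a positive integer $k$, $[k]=\{1,\dots,k\}$. For a labeling $f:V(G)\to[k]$ and $S\subseteq V(G)$, $f(S)=\sum_{u\in S}f(u)$. A labeling $f:V(G)\to[k]$ is an additive $k$-coloring if $f(N(u))\neq f(N(v))$ for every edge $(u,v)$ of $G$. The additive chromatic number $\eta(G)$ is the least $k$ for which $G$ has an additive $k$-coloring. *)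

(* Defs.v *)
From mathcomp Require Import all_boot.
Unset Printing Implicit Defensive.

(* A simple graph on a finite type T is given by an adjacency relation e
   (assumed symmetric and irreflexive for the graphs we build). *)

Definition neigh_sum (T : finType) (e : rel T) (f : T -> nat) (u : T) : nat :=
  \sum_(v | e u v) f v.

Definition additive_coloring (T : finType) (e : rel T) (k : nat) (f : T -> nat) : Prop :=
  (forall v, 1 <= f v <= k) /\
  (forall u v, e u v -> neigh_sum T e f u <> neigh_sum T e f v).

Definition has_additive_coloring (T : finType) (e : rel T) (k : nat) : Prop :=
  exists f : T -> nat, additive_coloring T e k f.

Definition additive_chromatic_number_is (T : finType) (e : rel T) (k : nat) : Prop :=
  has_additive_coloring T e k /\ (forall k', k' < k -> ~ has_additive_coloring T e k').

(* Cycle C_n on 'I_n: i ~ j iff j = i+1 mod n or i = j+1 mod n (simple for n >= 3). *)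
Definition cycle_rel (n : nat) : rel 'I_n :=
  fun i j => (val j == (val i).+1 %% n) || (val i == (val j).+1 %% n).

(* Wheel W_n = C_n \/ K_1 on option 'I_n, None being the hub. *)
Definition wheel_rel (n : nat) : rel (option 'I_n) :=
  fun x y => match x, y with
             | None, None => false
             | None, Some _ => true
             | Some _, None => true
             | Some i, Some j => cycle_rel n i j
             end.

(* Main.v *)
Require Import Defs.
From mathcomp Require Import all_boot zify.

Lemma sum_option (T : finType) (F : option T -> nat) (P : pred (option T)) :
  \sum_(v | P v) F v = (if P None then F None else 0) + \sum_(i | P (Some i)) F (Some i).
Proof.
have Sinj : injective (@Some T) by move=> x y [].
rewrite (perm_big (None :: map Some (index_enum T))) /=.
  by rewrite big_cons big_map; case: (P None).
apply: uniq_perm.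
- exact: index_enum_uniq.
- rewrite /= map_inj_uniq ?index_enum_uniq ?andbT //.
  by apply/mapP => -[].
- by case=> [x|] /=; rewrite mem_index_enum ?inE //= (mem_map Sinj) mem_index_enum.
Qed.

Definition o m j : 'I_m.+1 := inord (j %% m.+1).

Lemma val_o m j : val (o m j) = j %% m.+1.
Proof. by rewrite /o; apply: inordK; rewrite ltn_mod. Qed.

Lemma o_eq m a b : a %% m.+1 = b %% m.+1 -> o m a = o m b.
Proof. by move=> h; apply: val_inj; rewrite !val_o. Qed.

Lemma o_val m (i : 'I_m.+1) : o m i = i.
Proof. by apply: val_inj; rewrite val_o modn_small. Qed.

Lemma o_add m j : o m (j + m.+1) = o m j.
Proof. by apply: o_eq; rewrite modnDr. Qed.

Lemma o_Smod m j : o m (j %% m.+1).+1 = o m j.+1.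
Proof. by apply: o_eq; rewrite -addn1 modnDml addn1. Qed.

Lemma modS_aux n x : (x %% n).+1 %% n = x.+1 %% n.
Proof. by rewrite -addn1 modnDml addn1. Qed.

Lemma modP_aux m x k : k < m.+1 -> (x %% m.+1 == k.+1 %% m.+1) = (k == (x + m) %% m.+1).
Proof.
move=> hk; rewrite -(eqn_modDr m x k.+1 m.+1).
have -> : k.+1 + m = k + m.+1 by rewrite addSnnS.
by rewrite modnDr (modn_small hk) eq_sym.
Qed.

Lemma eq_o m (k : 'I_m.+1) y : (k == o m y) = (val k == y %% m.+1).
Proof.
apply/eqP/eqP => [->|h]; first by rewrite val_o.
by apply: val_inj; rewrite val_o.
Qed.

Lemma cyc_o m x (k : 'I_m.+1) :
  cycle_rel m.+1 (o m x) k = (val k == (x + m) %% m.+1) || (val k == x.+1 %% m.+1).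
Proof.
rewrite /cycle_rel val_o orbC; congr (_ || _).
  by rewrite modP_aux //; apply: ltn_ord.
by rewrite (modS_aux m.+1 x).
Qed.

Lemma cyc_o' m x (k : 'I_m.+1) :
  cycle_rel m.+1 (o m x) k = (k == o m (x + m)) || (k == o m x.+1).
Proof. by rewrite cyc_o !eq_o. Qed.

Lemma neq_aux m x : 2 <= m -> ((x + m) %% m.+1 == x.+1 %% m.+1) = false.
Proof.
move=> hm; have -> : x.+1 = x + 1 by rewrite addn1.
rewrite eqn_modDl modn_small // modn_small //; lia.
Qed.

Lemma rim m (Hm : 2 <= m) (f : option 'I_m.+1 -> nat) x :
  neigh_sum _ (wheel_rel m.+1) f (Some (o m x)) =
  f None + f (Some (o m (x + m))) + f (Some (o m x.+1)).
Proof.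
rewrite /neigh_sum sum_option /= -addnA; congr (_ + _).
rewrite (eq_bigl (fun k => (k == o m (x + m)) || (k == o m x.+1))); last first.
  by move=> k; rewrite cyc_o'.
have hab : o m (x + m) != o m x.+1.
  by rewrite eq_o val_o neq_aux.
rewrite (bigD1 (o m (x + m))) /=; last by rewrite eqxx.
rewrite (eq_bigl (fun k => k == o m x.+1)); last first.
  move=> k /=; case: (eqVneq k (o m (x + m))) => [->|nk] /=.
    by rewrite (negbTE hab).
  by case: (k == _).
by rewrite big_pred1_eq.
Qed.

Lemma hub m (f : option 'I_m.+1 -> nat) :
  neigh_sum _ (wheel_rel m.+1) f None = \sum_(0 <= j < m.+1) f (Some (o m j)).
Proof.
rewrite /neigh_sum sum_option /= add0n big_mkord.
by apply: eq_bigr => i _; rewrite o_val.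
Qed.

Lemma mA m x : x < m.+1 -> (x + m) %% m.+1 = if x == 0 then m else x.-1.
Proof.
move=> hx; case: eqP => [->|h]; first by rewrite add0n modn_small.
have -> : x + m = x.-1 + m.+1 by lia.
by rewrite modnDr modn_small //; lia.
Qed.

Lemma mB m x : x < m.+1 -> x.+1 %% m.+1 = if x == m then 0 else x.+1.
Proof.
move=> hx; case: eqP => [->|h]; first by rewrite modnn.
by rewrite modn_small //; lia.
Qed.

Lemma mC m x : 2 <= m -> x < m.+1 -> x.+2 %% m.+1 = if x == m then 1 else if x == m.-1 then 0 else x.+2.
Proof.
move=> hm hx; case: eqP => [->|h].
  have -> : m.+2 = 1 + m.+1 by lia.
  by rewrite modnDr modn_small //; lia.
case: eqP => [->|h2].
  have -> : m.-1.+2 = 0 + m.+1 by lia.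
  by rewrite modnDr.
by rewrite modn_small //; lia.
Qed.

Lemma mD m x : x < m.+1 -> (x.+1 + m) %% m.+1 = x.
Proof. by move=> hx; rewrite addSnnS addnC modnDl modn_small. Qed.

Definition Lev (r : nat) := if odd r then 2 else 1.
Definition Lodd m (r : nat) := if r == m then 2 else if odd r then 3 else 1.

Lemma even_ok m x : 3 <= m -> ~~ odd m.+1 -> x < m.+1 ->
  1 + Lev ((x + m) %% m.+1) + Lev (x.+1 %% m.+1) !=
  1 + Lev ((x.+1 + m) %% m.+1) + Lev (x.+2 %% m.+1).
Proof.
move=> hm ho hx; rewrite mA // mB // mD // mC //; last by lia.
rewrite /Lev.
case: (boolP (x == 0)) => h0; rewrite ?h0 ?(negbTE h0);
case: (boolP (x == m)) => h1; rewrite ?h1 ?(negbTE h1);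
case: (boolP (x == m.-1)) => h2; rewrite ?h2 ?(negbTE h2);
rewrite /=; repeat case: ifP => ?; rewrite /=; lia.
Qed.
Lemma sum_ge4 n (F : nat -> nat) : 4 <= n -> F 0 + F 1 + F 2 + F 3 <= \sum_(0 <= j < n) F j.
Proof.
move=> hn; rewrite (big_cat_nat _ (n:=4)) //=.
rewrite !big_nat_recr //= big_geq //; lia.
Qed.
Lemma shift_sum n (F : nat -> nat) : F n = F 0 -> \sum_(0 <= j < n) F j.+1 = \sum_(0 <= j < n) F j.
Proof.
case: n => [|n] h; first by rewrite !big_geq.
by rewrite big_nat_recr //= h big_nat_recl // addnC.
Qed.

Lemma odd_ok m x : 4 <= m -> odd m.+1 -> x < m.+1 ->
  1 + Lodd m ((x + m) %% m.+1) + Lodd m (x.+1 %% m.+1) !=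
  1 + Lodd m ((x.+1 + m) %% m.+1) + Lodd m (x.+2 %% m.+1).
Proof.
move=> hm ho hx; rewrite mA // mB // mD // mC //; last by lia.
rewrite /Lodd.
case: (boolP (x == 0)) => h0; rewrite ?h0 ?(negbTE h0);
case: (boolP (x == m)) => h1; rewrite ?h1 ?(negbTE h1);
case: (boolP (x == m.-1)) => h2; rewrite ?h2 ?(negbTE h2);
rewrite /=; repeat case: ifP => ?; rewrite /=; lia.
Qed.

Definition fL m (L : nat -> nat) (v : option 'I_m.+1) : nat :=
  if v is Some i then L (val i) else 1.

Lemma rimL m (Hm : 2 <= m) L x :
  neigh_sum _ (wheel_rel m.+1) (fL m L) (Some (o m x)) =
  1 + L ((x + m) %% m.+1) + L (x.+1 %% m.+1).
Proof. by rewrite rim //= !val_o. Qed.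

Lemma hubL m L :
  neigh_sum _ (wheel_rel m.+1) (fL m L) None = \sum_(0 <= j < m.+1) L (j %% m.+1).
Proof. by rewrite hub; apply: eq_bigr => j _ /=; rewrite val_o. Qed.

Lemma color_of m (Hm : 2 <= m) k (f : option 'I_m.+1 -> nat) :
  (forall v, 1 <= f v <= k) ->
  (forall x, x < m.+1 -> neigh_sum _ (wheel_rel m.+1) f (Some (o m x)) !=
                         neigh_sum _ (wheel_rel m.+1) f (Some (o m x.+1))) ->
  (forall x, x < m.+1 -> neigh_sum _ (wheel_rel m.+1) f None !=
                         neigh_sum _ (wheel_rel m.+1) f (Some (o m x))) ->
  additive_coloring _ (wheel_rel m.+1) k f.
Proof.
move=> hb h1 h2; split => // -[u|] [v|] //= e.
- rewrite -(o_val m u) in e *; rewrite cyc_o' in e.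
  case/orP: e => /eqP ->; last exact/eqP/h1.
  have hy : (u + m) %% m.+1 < m.+1 by rewrite ltn_mod.
  have e1 : o m (u + m) = o m ((u + m) %% m.+1) by apply: o_eq; rewrite modn_mod.
  have e2 : o m ((u + m) %% m.+1).+1 = o m u.
    by rewrite o_Smod -addnS o_add.
  by rewrite e1 -{1}e2; apply/eqP; rewrite eq_sym; apply: h1.
- rewrite -(o_val m u); apply/eqP; rewrite eq_sym; exact: h2.
- rewrite -(o_val m v); apply/eqP; exact: h2.
Qed.

Lemma Lev_le r : 1 <= Lev r <= 2.
Proof. by rewrite /Lev; case: ifP. Qed.

Lemma Lodd_le m r : 1 <= Lodd m r <= 3.
Proof. by rewrite /Lodd; case: ifP => //; case: ifP. Qed.

Lemma ub_even m : 3 <= m -> ~~ odd m.+1 -> has_additive_coloring _ (wheel_rel m.+1) 2.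
Proof.
move=> hm ho; have Hm2 : 2 <= m by lia.
exists (fL m Lev); apply: color_of; first by lia.
- by case=> [i|] //=; apply: Lev_le.
- by move=> x hx; rewrite !(rimL m Hm2); apply: even_ok.
- move=> x hx; rewrite hubL (rimL m Hm2).
  have hs : 6 <= \sum_(0 <= j < m.+1) Lev (j %% m.+1).
    apply: leq_trans (sum_ge4 _ _ _); last by lia.
    by rewrite !modn_small //; lia.
  have := Lev_le ((x + m) %% m.+1); have := Lev_le (x.+1 %% m.+1).
  lia.
Qed.

Lemma ub_odd m : 4 <= m -> odd m.+1 -> has_additive_coloring _ (wheel_rel m.+1) 3.
Proof.
move=> hm ho; have Hm2 : 2 <= m by lia.
exists (fL m (Lodd m)); apply: color_of; first by lia.
- by case=> [i|] //=; apply: Lodd_le.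
- by move=> x hx; rewrite !(rimL m Hm2); apply: odd_ok.
- move=> x hx; rewrite hubL (rimL m Hm2).
  have hs : 8 <= \sum_(0 <= j < m.+1) Lodd m (j %% m.+1).
    apply: leq_trans (sum_ge4 _ _ _); last by lia.
    rewrite !modn_small /Lodd //=; try lia.
    by repeat case: ifP => ?; lia.
  have := Lodd_le m ((x + m) %% m.+1); have := Lodd_le m (x.+1 %% m.+1).
  lia.
Qed.

Lemma edge_o m x : wheel_rel m.+1 (Some (o m x)) (Some (o m x.+1)).
Proof. by rewrite /= cyc_o' eqxx orbT. Qed.

Lemma lb1 m (Hm : 2 <= m) k (f : option 'I_m.+1 -> nat) :
  k < 2 -> ~ additive_coloring _ (wheel_rel m.+1) k f.
Proof.
move=> hk [hb he]; have f1 : forall v, f v = 1 by move=> v; have := hb v; lia.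
by apply: (he _ _ (edge_o m 0)); rewrite !rim // !f1.
Qed.

Lemma bits x y : x <= 1 -> y <= 1 -> (x != y) + 2 * (x * y) = x + y.
Proof. by case: x => [|[|]] //; case: y => [|[|]]. Qed.

Lemma lb2 m (Hm : 3 <= m) (ho : odd m.+1) (f : option 'I_m.+1 -> nat) :
  ~ additive_coloring _ (wheel_rel m.+1) 2 f.
Proof.
move=> [hb he].
pose A j := f (Some (o m j)) - 1.
have Ab : forall j, A j <= 1 by move=> j; have := hb (Some (o m j)); rewrite /A; lia.
have hA : forall j, A (j + m.+1) = A j by move=> j; rewrite /A o_add.
have C : forall j, A j + A j.+2 != A j.+1 + A j.+3.
  move=> j; have := he _ _ (edge_o m j.+1); rewrite !rim; try lia.
  have -> : j.+1 + m = j + m.+1 by rewrite addSnnS.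
  have -> : j.+2 + m = j.+1 + m.+1 by rewrite addSnnS.
  rewrite !o_add => hne.
  have := hb (Some (o m j)); have := hb (Some (o m j.+1));
  have := hb (Some (o m j.+2)); have := hb (Some (o m j.+3)).
  rewrite /A => *; apply/negP => /eqP h; apply: hne; lia.
pose z j := nat_of_bool (A j == A j.+1).
have loc : forall j, z j.+1 * (z j + z j.+2) = z j.+1.
  move=> j; have := C j; have := Ab j; have := Ab j.+1; have := Ab j.+2; have := Ab j.+3.
  rewrite /z; lia.
have zP : forall j, z (j + m.+1) = z j.
  by move=> j; rewrite /z hA -addSn hA.
have e1 : \sum_(0 <= j < m.+1) z j.+1 * (z j + z j.+2) = \sum_(0 <= j < m.+1) z j.+1.
  by apply: eq_bigr => j _; apply: loc.
rewrite (shift_sum _ z) in e1; last by rewrite -(add0n m.+1) zP.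
have e2 : \sum_(0 <= j < m.+1) z j.+1 * (z j + z j.+2) =
    \sum_(0 <= j < m.+1) z j * z j.+1 + \sum_(0 <= j < m.+1) z j.+1 * z j.+2.
  by rewrite -big_split; apply: eq_bigr => j _; rewrite mulnDr (mulnC (z j.+1) (z j)).
have e3 : \sum_(0 <= j < m.+1) z j.+1 * z j.+2 = \sum_(0 <= j < m.+1) z j * z j.+1.
  by apply: (shift_sum _ (fun j => z j * z j.+1)); rewrite -(add0n m.+1) zP -addSn zP.
have p1 : \sum_(0 <= j < m.+1) nat_of_bool (A j != A j.+1) + \sum_(0 <= j < m.+1) z j = m.+1.
  rewrite -big_split (eq_bigr (fun _ => 1)); first by rewrite sum_nat_const_nat muln1 subn0.
  by move=> j _; rewrite /z; case: eqP.
have p2 : \sum_(0 <= j < m.+1) nat_of_bool (A j != A j.+1) + \sum_(0 <= j < m.+1) 2 * (A j * A j.+1)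
    = \sum_(0 <= j < m.+1) A j + \sum_(0 <= j < m.+1) A j.+1.
  rewrite -!big_split; apply: eq_bigr => j _; exact: bits.
rewrite (shift_sum _ A) in p2; last by rewrite -(add0n m.+1) hA.
rewrite -(big_distrr (R:=nat)) /= in p2.
move: ho; lia.
Qed.

Theorem mainTheorem8 (n : nat) (hn : 4 <= n) :
  additive_chromatic_number_is (option (ordinal n)) (wheel_rel n) (if odd n then 3 else 2).
Proof.
case: n hn => [|m] // hn; have hm : 3 <= m by [].
have H2 : 2 <= m by lia.
split.
  case: ifP => ho; first by apply: ub_odd => //; move: ho; lia.
  by apply: ub_even => //; rewrite ho.
move=> k hk [f hf].
case: (ltnP k 2) => hk2; first exact: (lb1 m H2 k f hk2 hf).
case: ifP hk => ho hk; last by lia.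
have ek : k = 2 by lia.
subst k; exact: (lb2 m hm ho f hf).
Qed.
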